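(* Let $G=(V,E)$ be a finite connected graph, $G'=(V',E')$ a connected subgraph, $F\subset E$, $q\ge1$, $p\in(0,1)$, and $\lambda_1,\lambda_2\in\{1,q\}^E$ with $\lambda_1\le\lambda_2$. Then $$\mathbb P^{G'}\preceq\mathbb P^{G,E',\lambda_1},\qquad\mathbb P^{G,E',\lambda_1}\preceq\mathbb P^{G,E',\lambda_2},\qquad\mathbb P^{G,E\setminus F,\lambda_2}\preceq\mathbb P^{G/F}.$$ More generally, for $\lambda\in\{1,q\}^E$: if $E''\subset E'$ then $\mathbb P^{G',E'',\lambda_{E'}}\preceq\mathbb P^{G,E'',\lambda}$, and if $E''\subset E$ with $E''\cap F=\emptyset$ then $\mathbb P^{G,E'',\lambda}\preceq\mathbb P^{G/F,E'',\lambda_{E\setminus F}}$.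
   Context: For a finite connected (multi)graph $H$ with conductances $c$, $\Delta^H_c f(x)=\sum_{e=\{x,y\}}c_e(f(x)-f(y))$ acts on zero-sum functions on $\mathbf V(H)$; $\det\Delta^H_c$ is its determinant. For $\kappa$ and a set $E'$ of edges, $h(\kappa)$ and $s(\kappa)$ count the edges (in the domain of $\kappa$) with $\kappa_e=q$ resp. $\kappa_e=1$. $\mathbb P^{H}=\mathbb P^{H,p}$ is the measure on $\{1,q\}^{\mathbf E(H)}$ with $\mathbb P^H(\kappa)\propto p^{h(\kappa)}(1-p)^{s(\kappa)}(\det\Delta^H_\kappa)^{-1/2}$. For $E''\subset\mathbf E(H)$ and $\lambda\in\{1,q\}^{\mathbf E(H)}$, the measure with boundary condition is $\mathbb P^{H,E'',\lambda}(\kappa)\propto p^{h(\kappa)}(1-p)^{s(\kappa)}(\det\Delta^H_{(\lambda,\kappa)})^{-1/2}$ on $\kappa\in\{1,q\}^{E''}$, where $(\lambda,\kappa)$ equals $\kappa$ on $E''$ and $\lambda$ on $\mathbf E(H)\setminus E''$. $G/F$ is the multigraph obtained from $G$ by identifying the endpoints of each edge of $F$; its edges are identified with $E\setminus F$. $\mu_1\preceq\mu_2$ means $\mu_1(A)\le\mu_2(A)$ for every increasing event $A$ (coordinatewise order, $1<q$). *)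

(* Defs.v *)
From HB Require Import structures.
From mathcomp Require Import all_boot all_order all_algebra.
Set Implicit Arguments. Unset Strict Implicit. Unset Printing Implicit Defensive.
Import Order.TTheory GRing.Theory Num.Theory.
Local Open Scope ring_scope.

Section Defs.
Variable R : rcfType.

(* A finite multigraph H is given by a vertex set Ws : {set W}, an edge set
   Es : {set E} and an endpoint map ends : E -> W * W (loops allowed). *)

Definition adj (W E : finType) (Es : {set E}) (ends : E -> W * W) : rel W :=
  fun x y => [exists e in Es, (ends e == (x, y)) || (ends e == (y, x))].

Definition wf_mgraph (W E : finType) (Ws : {set W}) (Es : {set E})
    (ends : E -> W * W) : Prop :=
  forall e, e \in Es -> ((ends e).1 \in Ws) && ((ends e).2 \in Ws).

Definition connected_mgraph (W E : finType) (Ws : {set W}) (Es : {set E})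
    (ends : E -> W * W) : Prop :=
  Ws != set0 /\ {in Ws &, forall x y, connect (adj Es ends) x y}.

Definition laplacian (W E : finType) (Es : {set E}) (ends : E -> W * W)
    (c : E -> R) (f : W -> R) (x : W) : R :=
  \sum_(e in Es) c e *
     (((ends e).1 == x)%:R * (f x - f (ends e).2)
      + ((ends e).2 == x)%:R * (f x - f (ends e).1)).

(* det of Delta acting on zero-sum functions on Ws: writing
   enum Ws = w0 :: ws, the zero-sum functions have basis
   b_j = 1_{ws_j} - 1_{w0}, and a zero-sum g has coordinates g(ws_i);
   so the matrix of Delta in this basis is M i j = (Delta b_j)(ws_i). *)
Definition detLap (W E : finType) (Ws : {set W}) (Es : {set E})
    (ends : E -> W * W) (c : E -> R) : R :=
  match enum Ws with
  | [::] => 1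
  | w0 :: ws =>
      \det (\matrix_(i < size ws, j < size ws)
              laplacian Es ends c
                (fun x => (x == nth w0 ws j)%:R - (x == w0)%:R) (nth w0 ws i))
  end.

(* Configurations: kappa_e \in {1,q} is encoded by a boolean label
   (true <-> kappa_e = q, false <-> kappa_e = 1); the order 1 < q
   corresponds to false < true. *)
Definition cval (q : R) (b : bool) : R := if b then q else 1.

(* A configuration on a domain D \subset E is represented by the unique
   k : {ffun E -> bool} that is false outside D. *)
Definition canon (E : finType) (D : {set E}) (k : {ffun E -> bool}) : bool :=
  [forall e, (e \notin D) ==> ~~ k e].

Definition mix (E : finType) (D : {set E}) (lam k : {ffun E -> bool}) (q : R)
   : E -> R := fun e => cval q (if e \in D then k e else lam e).

Definition weight (W E : finType) (Ws : {set W}) (Es : {set E})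
    (ends : E -> W * W) (D : {set E}) (lam : {ffun E -> bool}) (q p : R)
    (k : {ffun E -> bool}) : R :=
  p ^+ #|[set e in D | k e]| * (1 - p) ^+ #|[set e in D | ~~ k e]|
  / Num.sqrt (detLap Ws Es ends (mix D lam k q)).

Definition Pbc (W E : finType) (Ws : {set W}) (Es : {set E})
    (ends : E -> W * W) (D : {set E}) (lam : {ffun E -> bool}) (q p : R)
    (A : {set {ffun E -> bool}}) : R :=
  (\sum_(k | canon D k && (k \in A)) weight Ws Es ends D lam q p k)
  / (\sum_(k | canon D k) weight Ws Es ends D lam q p k).

Definition Pfree (W E : finType) (Ws : {set W}) (Es : {set E})
    (ends : E -> W * W) (q p : R) (A : {set {ffun E -> bool}}) : R :=
  Pbc Ws Es ends Es [ffun => false] q p A.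

Definition increasing (E : finType) (A : {set {ffun E -> bool}}) : Prop :=
  forall k1 k2 : {ffun E -> bool},
    (forall e, k1 e ==> k2 e) -> k1 \in A -> k2 \in A.

Definition sdom (E : finType) (mu1 mu2 : {set {ffun E -> bool}} -> R) : Prop :=
  forall A, increasing A -> mu1 A <= mu2 A.

(* contraction G/F: vertices are the classes of the equivalence generated by
   the edges of F, edges E \ F, endpoints mapped to their classes. *)
Definition cls (V E : finType) (ends : E -> V * V) (F : {set E}) (x : V)
   : {set V} := [set y | connect (adj F ends) x y].

Definition contr_vertices (V E : finType) (ends : E -> V * V) (F : {set E})
   : {set {set V}} := [set cls ends F x | x : V].

Definition contr_ends (V E : finType) (ends : E -> V * V) (F : {set E})
   : E -> {set V} * {set V} :=
  fun e => (cls ends F (ends e).1, cls ends F (ends e).2).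

Definition simple_graph (V E : finType) (ends : E -> V * V) : Prop :=
  (forall e, (ends e).1 != (ends e).2) /\
  (forall e f, (ends e == ends f) || (ends e == ((ends f).2, (ends f).1)) ->
     e = f).

End Defs.

(* Main.v *)
Require Import Defs.
From HB Require Import structures.
From mathcomp Require Import all_boot all_order all_algebra.
From mathcomp Require Import ring lra.
Set Implicit Arguments. Unset Strict Implicit. Unset Printing Implicit Defensive.
Import Order.TTheory GRing.Theory Num.Theory.
Local Open Scope ring_scope.



Lemma det_rank1 (R : comNzRingType) n (x : 'cV[R]_n) (y : 'rV[R]_n) :
  \det (1%:M + x *m y) = 1 + (y *m x) 0 0.
Proof.
pose L := block_mx (1%:M : 'M_n) 0 y (1%:M : 'M_1).
pose L' := block_mx (1%:M : 'M_n) 0 (- y) (1%:M : 'M_1).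
pose X := block_mx (1%:M + x *m y) x 0 (1%:M : 'M_1).
have E : L *m X *m L' = block_mx 1%:M x 0 (1%:M + y *m x).
  rewrite /L /X /L' !mulmx_block !mul1mx !mulmx1 !mul0mx !mulmx0 !add0r !addr0.
  rewrite mulmxN addrK (addrC (y *m x)); congr block_mx.
  rewrite mulmxDr mulmx1 mulmxDl mul1mx mulmxA mulmxN.
  by rewrite addrACA addrN subrr addr0.
have := congr1 determinant E.
rewrite !det_mulmx /L /L' /X det_ublock !det_lblock !det1 !mul1r !mulr1.
by move=> ->; rewrite det_ublock det1 mul1r det_mx11 !mxE.
Qed.

Section Net.
Variables (R : rcfType) (W E : finType) (Ws : {set W}) (Es : {set E})
  (ends : E -> W * W).
Hypothesis wf : wf_mgraph Ws Es ends.

Definition delta e (f : W -> R) := f (ends e).1 - f (ends e).2.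
Definition beta e (x : W) : R := ((ends e).1 == x)%:R - ((ends e).2 == x)%:R.
Definition Qf (c : E -> R) (f : W -> R) := \sum_(e in Es) c e * delta e f ^+ 2.

Lemma lapE c f x : laplacian Es ends c f x =
  \sum_(e in Es) c e * (beta e x * delta e f).
Proof.
apply: eq_bigr => e _; congr (_ * _); rewrite /beta /delta.
case: eqP => [<-|h1]; case: eqP => [h2|h2] /=; rewrite ?mulr1n ?mulr0n ?mul1r ?mul0r ?add0r ?addr0 ?subr0 ?sub0r //.
- by rewrite h2 !subrr addr0 mul0r.
- by rewrite mul1r.
- by rewrite h2 mulN1r opprB.
- by rewrite oppr0 mul0r.
Qed.

Lemma sum_ind (f : W -> R) a : a \in Ws ->
  \sum_(x in Ws) f x * (a == x)%:R = f a.
Proof.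
move=> aW; rewrite (bigD1 a) //= eqxx mulr1 big1 ?addr0 // => x /andP[_ /negPf].
by rewrite eq_sym => ->; rewrite mulr0.
Qed.

Lemma sum_beta f e : e \in Es -> \sum_(x in Ws) f x * beta e x = delta e f.
Proof.
move=> eE; have /andP[h1 h2] := wf eE.
rewrite /beta; under eq_bigr do rewrite mulrBr.
by rewrite sumrB !sum_ind.
Qed.

Lemma pairing c f g : \sum_(x in Ws) f x * laplacian Es ends c g x =
  \sum_(e in Es) c e * (delta e f * delta e g).
Proof.
under eq_bigr do rewrite lapE big_distrr.
rewrite exchange_big /=; apply: eq_bigr => e eE.
transitivity (c e * delta e g * \sum_(x in Ws) f x * beta e x).
  by rewrite big_distrr; apply: eq_bigr => x _ /=; ring.
by rewrite sum_beta //; ring.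
Qed.

Lemma lap_sum0 (c : E -> R) (g : W -> R) : \sum_(x in Ws) laplacian Es ends c g x = 0.
Proof.
have := pairing c (fun _ => 1 : R) g; under eq_bigr do rewrite mul1r.
move=> ->; apply: big1 => e _; by rewrite /delta subrr !mul0r mulr0.
Qed.

Lemma lapD (c c' : E -> R) e (t : R) (f : W -> R) x : e \in Es -> c' e = c e + t ->
  (forall e', e' != e -> c' e' = c e') ->
  laplacian Es ends c' f x = laplacian Es ends c f x + t * (beta e x * delta e f).
Proof.
move=> eE hce hc'; rewrite !lapE (bigD1 e) //= [in RHS](bigD1 e) //= hce.
rewrite mulrDl -!addrA; congr (_ + _); rewrite addrC; congr (_ + _).
by apply: eq_bigr => e' /andP[_ ne]; rewrite hc'.
Qed.


Lemma sum_ind1 a : a \in Ws -> \sum_(x in Ws) ((x == a)%:R : R) = 1.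
Proof.
move=> aW; have := sum_ind (fun=> 1) aW.
by under eq_bigr do rewrite mul1r eq_sym.
Qed.

Section Enum.
Variables (w0 : W) (ws : seq W).
Hypothesis Henum : enum Ws = w0 :: ws.
Local Notation n := (size ws).

Lemma uniq_ws : uniq (w0 :: ws).
Proof. by rewrite -Henum enum_uniq. Qed.

Lemma memWs x : (x \in Ws) = (x \in w0 :: ws).
Proof. by rewrite -Henum mem_enum. Qed.

Lemma sumWs (F : W -> R) :
  \sum_(x in Ws) F x = F w0 + \sum_(i < n) F (nth w0 ws i).
Proof. by rewrite -big_enum Henum big_cons (big_nth w0) big_mkord. Qed.

Definition bj (j : 'I_n) (x : W) : R := (x == nth w0 ws j)%:R - (x == w0)%:R.
Definition Mc (c : E -> R) : 'M[R]_n :=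
  \matrix_(i, j) laplacian Es ends c (bj j) (nth w0 ws i).
Lemma detLapE c : detLap Ws Es ends c = \det (Mc c).
Proof. by rewrite /detLap Henum. Qed.
Definition Fv (g : 'cV[R]_n) (x : W) : R := \sum_j g j 0 * bj j x.

Lemma nth_ws_neq (i : 'I_n) : (nth w0 ws i == w0) = false.
Proof.
have := uniq_ws; rewrite cons_uniq => /andP[w0n _].
by apply/negP => /eqP h; move: w0n; rewrite -h mem_nth.
Qed.

Lemma nth_ws_inj (i j : 'I_n) : (nth w0 ws i == nth w0 ws j) = (i == j).
Proof.
have := uniq_ws; rewrite cons_uniq => /andP[_ u].
by rewrite nth_uniq.
Qed.

Lemma bjE (i j : 'I_n) : bj j (nth w0 ws i) = (i == j)%:R.
Proof. by rewrite /bj nth_ws_inj nth_ws_neq subr0. Qed.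

Lemma FvE g (i : 'I_n) : Fv g (nth w0 ws i) = g i 0.
Proof.
rewrite /Fv (bigD1 i) //= bjE eqxx mulr1 big1 ?addr0 // => j /negPf.
by rewrite bjE eq_sym => ->; rewrite mulr0.
Qed.

Lemma nth_inWs (i : 'I_n) : nth w0 ws i \in Ws.
Proof. by rewrite memWs inE mem_nth ?orbT. Qed.

Lemma w0_inWs : w0 \in Ws.
Proof. by rewrite memWs inE eqxx. Qed.

Lemma sum_bj j : \sum_(x in Ws) bj j x = 0.
Proof. by rewrite /bj sumrB !sum_ind1 ?subrr ?nth_inWs ?w0_inWs. Qed.

Lemma sum_Fv g : \sum_(x in Ws) Fv g x = 0.
Proof.
rewrite /Fv exchange_big /=; apply: big1 => j _.
by rewrite -big_distrr /= sum_bj mulr0.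
Qed.

Lemma delta_Fv e g : delta e (Fv g) = \sum_j g j 0 * delta e (bj j).
Proof. rewrite /delta /Fv -sumrB. apply: eq_bigr => j _. exact: (esym (mulrBr _ _ _)). Qed.

Lemma lap_Fv c g x : laplacian Es ends c (Fv g) x =
  \sum_j g j 0 * laplacian Es ends c (bj j) x.
Proof.
rewrite lapE; under eq_bigr do rewrite delta_Fv !big_distrr.
rewrite exchange_big /=; apply: eq_bigr => j _.
rewrite lapE big_distrr; apply: eq_bigr => e _ /=; ring.
Qed.

Lemma Mc_mul c g (i : 'I_n) : (Mc c *m g) i 0 = laplacian Es ends c (Fv g) (nth w0 ws i).
Proof.
rewrite mxE lap_Fv; apply: eq_bigr => j _; by rewrite mxE mulrC.
Qed.

Lemma agree (phi psi : W -> R) :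
  \sum_(x in Ws) phi x = \sum_(x in Ws) psi x ->
  (forall i : 'I_n, phi (nth w0 ws i) = psi (nth w0 ws i)) ->
  forall x, x \in Ws -> phi x = psi x.
Proof.
move=> hs hi x; rewrite !sumWs in hs.
have e : \sum_(i < n) phi (nth w0 ws i) = \sum_(i < n) psi (nth w0 ws i).
  by apply: eq_bigr => i _; rewrite hi.
rewrite e in hs; move/addIr: hs => h0.
rewrite memWs inE => /orP[/eqP -> //|xin].
have ix : (index x ws < n)%N by rewrite index_mem.
by have := hi (Ordinal ix); rewrite /= nth_index.
Qed.


Hypothesis conn : connected_mgraph Ws Es ends.

Lemma const_on (f : W -> R) : (forall e, e \in Es -> delta e f = 0) ->
  forall x y, x \in Ws -> y \in Ws -> f x = f y.
Proof.
move=> hd x y xW yW; case: conn => _ /(_ x y xW yW) cxy.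
have cl : closed (adj Es ends) [pred z | f z == f x].
  move=> z z' /existsP[e /andP[eE /orP[] /eqP he]]; have := hd e eE;
  rewrite /delta he /= => /eqP; rewrite subr_eq0 => /eqP h; by rewrite !inE h.
have := closed_connect cl cxy; rewrite !inE eqxx => /esym/eqP.
by move=> ->.
Qed.

Lemma inj_N (c : E -> R) (s : R) (hc : forall e, 0 < c e) (s0 : 0 <= s) (s1 : s <= 1)
  (g : 'cV_n) : ((1 - s) *: 1%:M + s *: Mc c) *m g = 0 -> g = 0.
Proof.
move=> H; set f := Fv g.
have hcomp (i : 'I_n) : (1 - s) * f (nth w0 ws i) + s * laplacian Es ends c f (nth w0 ws i) = 0.
  have := congr1 (fun m : 'cV[R]_n => m i 0) H; rewrite mulmxDl -!scalemxAl mul1mx.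
  have E1 : (((1 - s) *: g + s *: (Mc c *m g)) : 'cV_n) i 0 =
     (1-s) * g i 0 + s * (Mc c *m g) i 0 by rewrite !mxE.
  move=> /= h; rewrite E1 in h; by rewrite /f FvE -Mc_mul h mxE.
have hphi : forall x, x \in Ws -> (1 - s) * f x + s * laplacian Es ends c f x = (fun=> 0) x.
  apply: agree => //=; rewrite big_split /= -!big_distrr /= sum_Fv lap_sum0.
  by rewrite !mulr0 addr0 big1.
have key : (1 - s) * \sum_(x in Ws) f x ^+ 2 + s * Qf c f = 0.
  transitivity (\sum_(x in Ws) f x * ((1 - s) * f x + s * laplacian Es ends c f x)).
    rewrite /Qf -pairing big_distrr /= big_distrr /= -big_split /=.
    by apply: eq_bigr => x _; rewrite /delta; ring.
  by apply: big1 => x xW; rewrite hphi // mulr0.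
have A0 : 0 <= (1 - s) * \sum_(x in Ws) f x ^+ 2.
  by apply: mulr_ge0; [rewrite subr_ge0 | apply: sumr_ge0 => x _; apply: sqr_ge0].
have B0 : 0 <= s * Qf c f.
  apply: mulr_ge0 => //; apply: sumr_ge0 => e _; apply: mulr_ge0; [exact: ltW|exact: sqr_ge0].
have fz : forall x, x \in Ws -> f x = 0.
  have [slt1|] := ltP s 1.
    have : (1 - s) * \sum_(x in Ws) f x ^+ 2 = 0 by lra.
    move/eqP; rewrite mulf_eq0 subr_eq0 (gt_eqF slt1) /=.
    move/eqP/psumr_eq0P => h x xW; apply/eqP; rewrite -sqrf_eq0; apply/eqP; apply: h => //.
    by move=> y _; apply: sqr_ge0.
  move=> s1'; have se : s = 1 by apply/eqP; rewrite eq_le s1.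
  have : Qf c f = 0 by move: key; rewrite se subrr mul0r add0r mul1r.
  have hge : forall e, e \in Es -> 0 <= c e * delta e f ^+ 2.
    by move=> e _; apply: mulr_ge0; [exact: ltW|exact: sqr_ge0].
  move=> hQ; have hq : forall e, e \in Es -> c e * delta e f ^+ 2 = 0.
    by apply/(psumr_eq0P hge); move: hQ; rewrite /Qf => ->.
  have hd : forall e, e \in Es -> delta e f = 0.
    move=> e eE; have := hq e eE; move/eqP; rewrite mulf_eq0 (gt_eqF (hc e)) /=.
    by rewrite sqrf_eq0 => /eqP.
  have cst := const_on hd.
  have : \sum_(x in Ws) f x = f w0 *+ #|Ws|.
    by rewrite -sumr_const; apply: eq_bigr => x xW; apply: cst => //; exact: w0_inWs.
  rewrite sum_Fv => /esym/eqP; rewrite mulrn_eq0 => /orP[|/eqP h0].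
    by rewrite cards_eq0; case: conn => /negPf ->.
  by move=> x xW; rewrite (cst x w0) //; exact: w0_inWs.
apply/matrixP => i j; rewrite (ord1 j) !mxE -FvE; apply: fz.
exact: nth_inWs.
Qed.

Lemma detN_neq0 (c : E -> R) (s : R) (hc : forall e, 0 < c e) (s0 : 0 <= s) (s1 : s <= 1) :
  \det ((1 - s) *: 1%:M + s *: Mc c) != 0.
Proof.
rewrite -det_tr; apply/det0P => -[v vn0 hv]; move: vn0.
have : ((1 - s) *: 1%:M + s *: Mc c) *m v^T = 0.
  by apply: trmx_inj; rewrite trmx_mul trmxK hv trmx0.
move/(inj_N hc s0 s1) => h; by rewrite -[v]trmxK h trmx0 eqxx.
Qed.

Lemma detMc_gt0 (c : E -> R) (hc : forall e, 0 < c e) : 0 < \det (Mc c).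
Proof.
pose A : 'M[{poly R}]_n :=
  \matrix_(i, j) ((1 - 'X) * ((i == j)%:R)%:P + 'X * (Mc c i j)%:P).
have hA s : (\det A).[s] = \det ((1 - s) *: 1%:M + s *: Mc c).
  rewrite -horner_evalE -det_map_mx; congr (\det _); apply/matrixP => i j.
  by rewrite !mxE -[LHS]/(horner_eval s _) horner_evalE !hornerE.
have h0 : (\det A).[0] = 1 by rewrite hA subr0 scale1r scale0r addr0 det1.
have h1 : (\det A).[1] = \det (Mc c) by rewrite hA subrr scale0r add0r scale1r.
rewrite ltNge; apply/negP => hle.
have [x /andP[x0 x1] rx] : exists2 x, 0 <= x <= 1 & root (- \det A) x.
  apply: poly_ivt => //; rewrite !hornerN h0 h1 oppr_le0 ler01 /= oppr_ge0 //.
move: rx; rewrite /root hornerN oppr_eq0 hA.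
by rewrite (negbTE (detN_neq0 hc x0 x1)).
Qed.


Lemma rank1 (c c' : E -> R) e (t : R) (hc : forall e, 0 < c e) :
  e \in Es -> c' e = c e + t -> (forall e', e' != e -> c' e' = c e') ->
  exists H : W -> R,
    [/\ \det (Mc c') = \det (Mc c) * (1 + t * delta e H),
     (forall f, 2 * delta e f - Qf c f <= delta e H) & delta e H = Qf c H].
Proof.
move=> eE hce hc'.
pose u : 'cV[R]_n := \col_i beta e (nth w0 ws i).
pose v : 'rV[R]_n := \row_j delta e (bj j).
have hM : Mc c' = Mc c + t *: (u *m v).
  apply/matrixP => i j; rewrite !mxE (lapD _ _ eE hce hc') big_ord1 !mxE.
  by [].
have un : Mc c \in unitmx by rewrite unitmxE unitfE gt_eqF // detMc_gt0.
pose hv := invmx (Mc c) *m u.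
have Mh : Mc c *m hv = u by rewrite /hv mulKVmx.
have hM' : Mc c' = Mc c *m (1%:M + (t *: hv) *m v).
  by rewrite hM mulmxDr mulmx1 -scalemxAl -scalemxAr mulmxA Mh.
pose H := Fv hv.
have vh : (v *m hv) 0 0 = delta e H.
  rewrite /H delta_Fv mxE; apply: eq_bigr => j _; by rewrite !mxE mulrC.
have lapH : forall x, x \in Ws -> laplacian Es ends c H x = beta e x.
  apply: agree.
    rewrite lap_sum0; have := sum_beta (fun=> 1) eE.
    under eq_bigr do rewrite mul1r.
    by move=> ->; rewrite /delta subrr.
  move=> i; rewrite -Mc_mul Mh mxE //.
have Bf : forall f, \sum_(e' in Es) c e' * (delta e' f * delta e' H) = delta e f.
  move=> f; rewrite -pairing -(sum_beta f eE); apply: eq_bigr => x xW.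
  by rewrite lapH.
have QH : delta e H = Qf c H.
  by rewrite -(Bf H) /Qf; apply: eq_bigr => e' _; rewrite expr2.
exists H; split => //.
- by rewrite hM' det_mulmx det_rank1 -scalemxAr mxE vh.
- move=> f; rewrite -{1}(Bf f) /Qf mulr_sumr -sumrB QH /Qf.
  apply: ler_sum => e' _; rewrite -subr_ge0.
  have -> : c e' * delta e' H ^+ 2 - (2 * (c e' * (delta e' f * delta e' H)) -
    c e' * delta e' f ^+ 2) = c e' * (delta e' f - delta e' H) ^+ 2 by ring.
  by apply: mulr_ge0; [exact: ltW|exact: sqr_ge0].
Qed.

End Enum.

Lemma detLap_gt0 (conn : connected_mgraph Ws Es ends) (c : E -> R) :
  (forall e, 0 < c e) -> 0 < detLap Ws Es ends c.
Proof.
move=> hc; case H: (enum Ws) => [|w0 ws].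
  by rewrite /detLap H ltr01.
by rewrite (detLapE H) (detMc_gt0 H conn).
Qed.

Lemma rank1_detLap (conn : connected_mgraph Ws Es ends) (c c' : E -> R) e (t : R) :
  (forall e, 0 < c e) ->
  e \in Es -> c' e = c e + t -> (forall e', e' != e -> c' e' = c e') ->
  exists H : W -> R,
    [/\ detLap Ws Es ends c' = detLap Ws Es ends c * (1 + t * delta e H),
     (forall f, 2 * delta e f - Qf c f <= delta e H) & delta e H = Qf c H].
Proof.
move=> hc eE hce hc'; case H: (enum Ws) => [|w0 ws].
  by move/andP: (wf eE) => [h _]; move: h; rewrite -mem_enum H.
rewrite !(detLapE H); exact: (rank1 H conn hc eE hce hc').
Qed.

End Net.



Lemma ad1 (R : realFieldType) (a0 a1 b0 b1 c0 c1 d0 d1 : R) :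
  0 <= a0 -> 0 <= a1 -> 0 <= b0 -> 0 <= b1 -> 0 <= c0 -> 0 <= c1 -> 0 <= d0 -> 0 <= d1 ->
  a0 * b0 <= c0 * d0 -> a0 * b1 <= c1 * d0 -> a1 * b0 <= c1 * d0 -> a1 * b1 <= c1 * d1 ->
  (a0 + a1) * (b0 + b1) <= (c0 + c1) * (d0 + d1).
Proof.
move=> ha0 ha1 hb0 hb1 hc0 hc1 hd0 hd1 h00 h01 h10 h11.
have [M0|Mpos] := eqVneq (c1 * d0) 0.
  have e1 : a0 * b1 = 0 by apply/eqP; rewrite eq_le mulr_ge0 // andbT -M0.
  have e2 : a1 * b0 = 0 by apply/eqP; rewrite eq_le mulr_ge0 // andbT -M0.
  have : 0 <= c0 * d1 by apply: mulr_ge0.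
  nra.
have M0 : 0 < c1 * d0 by rewrite lt_def Mpos mulr_ge0.
have k : (a0 * b1) * (a1 * b0) <= (c0 * d1) * (c1 * d0).
  have -> : (c0 * d1) * (c1 * d0) = (c0 * d0) * (c1 * d1) by ring.
  have -> : (a0 * b1) * (a1 * b0) = (a0 * b0) * (a1 * b1) by ring.
  by apply: ler_pM => //; apply: mulr_ge0.
have k2 : (c1 * d0 - a0 * b1) * (c1 * d0 - a1 * b0) >= 0.
  by apply: mulr_ge0; rewrite subr_ge0.
have k3 : (a0 * b1 + a1 * b0) * (c1 * d0) <= (c1 * d0 + c0 * d1) * (c1 * d0) by nra.
have k4 : a0 * b1 + a1 * b0 <= c1 * d0 + c0 * d1.
  by rewrite -(ler_pM2r M0).
nra.
Qed.

Section AD.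
Variables (R : realFieldType) (E : finType).
Implicit Types (k x y : {ffun E -> bool}).

Definition kjoin x y : {ffun E -> bool} := [ffun e => x e || y e].
Definition kmeet x y : {ffun E -> bool} := [ffun e => x e && y e].
Definition upd (e : E) x : {ffun E -> bool} := [ffun e' => (e' == e) || x e'].
Definition down (e : E) x : {ffun E -> bool} := [ffun e' => (e' != e) && x e'].

Lemma kjoinE x y e : kjoin x y e = x e || y e. Proof. by rewrite ffunE. Qed.
Lemma kmeetE x y e : kmeet x y e = x e && y e. Proof. by rewrite ffunE. Qed.
Lemma updE e x e' : upd e x e' = (e' == e) || x e'. Proof. by rewrite ffunE. Qed.
Lemma downE e x e' : down e x e' = (e' != e) && x e'. Proof. by rewrite ffunE. Qed.
Definition kE := (kjoinE, kmeetE, updE, downE).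

Lemma canonP (D : {set E}) k : reflect (forall e, e \notin D -> k e = false) (canon D k).
Proof.
apply: (iffP forallP) => [h e eD|h e]; first by have := h e; rewrite eD /= => /negPf.
by apply/implyP => /h ->.
Qed.

Lemma split_sum (D : {set E}) e (F : {ffun E -> bool} -> R) : e \in D ->
  \sum_(k | canon D k) F k = \sum_(k | canon (D :\ e) k) (F k + F (upd e k)).
Proof.
move=> eD; rewrite big_split /= (bigID (fun k => k e)) /= addrC; congr (_ + _).
  apply: eq_bigl => k; apply/andP/canonP => [[/canonP h /negPf ke] e' | h].
    by rewrite !inE negb_and negbK => /orP[/eqP ->|]; [|apply: h].
  split; last by rewrite h // !inE eqxx.
  by apply/canonP => e' e'D; apply: h; rewrite !inE negb_and e'D orbT.
rewrite (reindex_onto (upd e) (down e)) /=.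
  apply: eq_bigl => k; apply/idP/idP.
    move=> /andP[/andP[/canonP h _] /eqP hd]; apply/canonP => e' e'D.
    rewrite -hd downE; case: eqP => //= ne; apply: h.
    by move: e'D; rewrite !inE negb_and negbK => /orP[/eqP|].
  move/canonP => h; apply/andP; split; last first.
    apply/eqP/ffunP => e'; rewrite !kE; case: eqP => [->|ne] /=.
      by rewrite h // !inE eqxx.
    by [].
  apply/andP; split; last by rewrite kE eqxx.
  apply/canonP => e' e'D; rewrite kE h; last by rewrite !inE negb_and e'D orbT.
  by rewrite orbF; apply/eqP => ee; move: e'D; rewrite ee eD.
move=> k /andP[_ ke]; apply/ffunP => e'; rewrite !kE.
by case: eqP => [->|ne] //=; rewrite ke.
Qed.

Lemma sum_canon0 (F : {ffun E -> bool} -> R) :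
  \sum_(k | canon set0 k) F k = F [ffun => false].
Proof.
apply: big_pred1 => k /=; apply/canonP/eqP => [h|->].
  by apply/ffunP => e; rewrite ffunE h // inE.
by move=> e _; rewrite ffunE.
Qed.

Theorem four_functions (D : {set E}) (a b g d : {ffun E -> bool} -> R) :
  (forall k, 0 <= a k) -> (forall k, 0 <= b k) -> (forall k, 0 <= g k) -> (forall k, 0 <= d k) ->
  (forall x y, canon D x -> canon D y -> a x * b y <= g (kjoin x y) * d (kmeet x y)) ->
  (\sum_(k | canon D k) a k) * (\sum_(k | canon D k) b k) <=
  (\sum_(k | canon D k) g k) * (\sum_(k | canon D k) d k).
Proof.
move: {2}#|D| (erefl #|D|) => n; elim: n D a b g d => [|n IH] D a b g d.
  move/eqP; rewrite cards_eq0 => /eqP -> ha hb hg hd h.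
  rewrite !sum_canon0; have := h [ffun => false] [ffun => false].
  have -> : kjoin [ffun => false] [ffun => false] = [ffun => false].
    by apply/ffunP => e; rewrite !ffunE.
  have -> : kmeet [ffun => false] [ffun => false] = [ffun => false].
    by apply/ffunP => e; rewrite !ffunE.
  by apply; apply/canonP => e _; rewrite ffunE.
move=> hD ha hb hg hd h.
have [e eD] : exists e, e \in D.
  by apply/set0Pn; rewrite -cards_eq0 hD.
have hD0 : #|D :\ e| = n by rewrite (cardsD1 e D) eD add1n in hD; case: hD.
rewrite !(split_sum _ eD).
apply: (IH _ (fun k => a k + a (upd e k)) (fun k => b k + b (upd e k))
  (fun k => g k + g (upd e k)) (fun k => d k + d (upd e k)) hD0)
  => [k|k|k|k|x y cx cy]; try by apply: addr_ge0.
have cD k : canon (D :\ e) k -> canon D k.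
  by move/canonP => hk; apply/canonP => e' e'D; apply: hk; rewrite !inE (negbTE e'D) andbF.
have cU k : canon (D :\ e) k -> canon D (upd e k).
  move/canonP => hk; apply/canonP => e' e'D; rewrite kE hk ?orbF.
    by apply/eqP => ee; move: e'D; rewrite ee eD.
  by rewrite !inE (negbTE e'D) andbF.
have xe : x e = false by move/canonP: cx; apply; rewrite !inE eqxx.
have ye : y e = false by move/canonP: cy; apply; rewrite !inE eqxx.
have J1 : kjoin x (upd e y) = upd e (kjoin x y).
  by apply/ffunP => e'; rewrite !kE; case: eqP => [->|]; rewrite ?xe ?orbT.
have J2 : kjoin (upd e x) y = upd e (kjoin x y).
  by apply/ffunP => e'; rewrite !kE; case: eqP => [->|].
have J3 : kjoin (upd e x) (upd e y) = upd e (kjoin x y).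
  by apply/ffunP => e'; rewrite !kE; case: eqP => [->|].
have M1 : kmeet x (upd e y) = kmeet x y.
  by apply/ffunP => e'; rewrite !kE; case: eqP => [->|]; rewrite ?xe.
have M2 : kmeet (upd e x) y = kmeet x y.
  by apply/ffunP => e'; rewrite !kE; case: eqP => [->|]; rewrite ?ye ?andbF.
have M3 : kmeet (upd e x) (upd e y) = upd e (kmeet x y).
  by apply/ffunP => e'; rewrite !kE; case: eqP => [->|].
apply: ad1 => //.
- by apply: h; apply: cD.
- by rewrite -J1 -M1; apply: h; [apply: cD|apply: cU].
- by rewrite -J2 -M2; apply: h; [apply: cU|apply: cD].
- by rewrite -J3 -M3; apply: h; apply: cU.
Qed.


Lemma holley (D : {set E}) (w1 w2 : {ffun E -> bool} -> R) (A : {set {ffun E -> bool}}) :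
  (forall k, 0 <= w1 k) -> (forall k, 0 <= w2 k) ->
  (forall x y, canon D x -> canon D y -> w1 x * w2 y <= w2 (kjoin x y) * w1 (kmeet x y)) ->
  increasing A ->
  (\sum_(k | canon D k && (k \in A)) w1 k) * (\sum_(k | canon D k) w2 k) <=
  (\sum_(k | canon D k && (k \in A)) w2 k) * (\sum_(k | canon D k) w1 k).
Proof.
move=> h1 h2 hw incA.
have := @four_functions D (fun k => if k \in A then w1 k else 0)
  (fun k => if k \in A then 0 else w2 k) (fun k => if k \in A then w2 k else 0)
  (fun k => if k \in A then 0 else w1 k).
have jA x y : x \in A -> kjoin x y \in A.
  by apply: incA => e; rewrite kjoinE; apply/implyP => ->.
have mA x y : y \notin A -> kmeet x y \notin A.
  by apply: contra; apply: incA => e; rewrite kmeetE; apply/implyP => /andP[].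
rewrite -!big_mkcondr /=.
have e1 : forall w : {ffun E -> bool} -> R, \sum_(k | canon D k) (if k \in A then 0 else w k) =
    \sum_(k | canon D k && (k \notin A)) w k.
  move=> w; rewrite big_mkcondr /=; apply: eq_bigr => k _; by case: (k \in A).
rewrite !e1 !(bigID (fun k => k \in A) (fun k => canon D k)) /=.
move=> H.
have : (\sum_(i | canon D i && (i \in A)) w1 i) * (\sum_(i | canon D i && (i \notin A)) w2 i) <=
  (\sum_(i | canon D i && (i \in A)) w2 i) * (\sum_(i | canon D i && (i \notin A)) w1 i).
  apply: H => [k|k|k|k|x y cx cy]; try by case: ifP.
  case: ifP => xA; last by rewrite mul0r; case: ifP => _; apply: mulr_ge0; rewrite ?lexx //; case: ifP.
  case: ifP => yA; first by rewrite mulr0; apply: mulr_ge0; case: ifP.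
  by rewrite jA // (negbTE (mA x y (negbT yA))); apply: hw.
nra.
Qed.

End AD.



Section Gen.
Variables (R : rcfType) (E W1 W2 : finType) (Ws1 : {set W1}) (Es1 : {set E})
  (ends1 : E -> W1 * W1) (Ws2 : {set W2}) (Es2 : {set E}) (ends2 : E -> W2 * W2)
  (D : {set E}) (lam1 lam2 : {ffun E -> bool}) (q p : R).
Hypotheses (wf1 : wf_mgraph Ws1 Es1 ends1) (conn1 : connected_mgraph Ws1 Es1 ends1)
  (wf2 : wf_mgraph Ws2 Es2 ends2) (conn2 : connected_mgraph Ws2 Es2 ends2)
  (D1s : D \subset Es1) (D2s : D \subset Es2) (hq : 1 <= q) (hp0 : 0 < p) (hp1 : p < 1).
Hypothesis Hcmp : forall k1 k2 : {ffun E -> bool}, (forall e, k1 e ==> k2 e) ->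
  forall f : W2 -> R, exists g : W1 -> R,
    (forall e, e \in D -> delta ends1 e g = delta ends2 e f) /\
    Qf Es1 ends1 (mix D lam1 k1 q) g <= Qf Es2 ends2 (mix D lam2 k2 q) f.

Let Dd1 k := detLap Ws1 Es1 ends1 (mix D lam1 k q).
Let Dd2 k := detLap Ws2 Es2 ends2 (mix D lam2 k q).

Lemma mix_pos lam (k : {ffun E -> bool}) e : 0 < mix D lam k q e.
Proof. rewrite /mix /cval; case: (if e \in D then k e else lam e); [exact: lt_le_trans ltr01 hq|exact: ltr01]. Qed.

Lemma Dd1_gt0 k : 0 < Dd1 k.
Proof. rewrite /Dd1; exact: (detLap_gt0 wf1 conn1 (mix_pos lam1 k)). Qed.
Lemma Dd2_gt0 k : 0 < Dd2 k.
Proof. rewrite /Dd2; exact: (detLap_gt0 wf2 conn2 (mix_pos lam2 k)). Qed.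

Lemma mix_upd lam (k : {ffun E -> bool}) e : e \in D -> k e = false ->
  mix D lam (upd e k) q e = mix D lam k q e + (q - 1).
Proof. by move=> eD ke; rewrite /mix eD updE eqxx ke /cval; ring. Qed.

Lemma mix_upd' lam (k : {ffun E -> bool}) e e' : e' != e -> mix D lam (upd e k) q e' = mix D lam k q e'.
Proof. by move=> ne; rewrite /mix updE (negbTE ne). Qed.

Lemma single (k1 k2 : {ffun E -> bool}) e : (forall e, k1 e ==> k2 e) -> e \in D -> k2 e = false ->
  Dd2 (upd e k2) * Dd1 k1 <= Dd1 (upd e k1) * Dd2 k2.
Proof.
move=> le eD k2e.
have k1e : k1 e = false by move: (le e); rewrite k2e implybF => /negPf.
have eE1 : e \in Es1 by apply: (subsetP D1s).
have eE2 : e \in Es2 by apply: (subsetP D2s).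
have [H1 [h1 i1 _]] := rank1_detLap wf1 conn1 (mix_pos lam1 k1) eE1
  (mix_upd lam1 eD k1e) (@mix_upd' lam1 k1 e).
have [H2 [h2 _ j2]] := rank1_detLap wf2 conn2 (mix_pos lam2 k2) eE2
  (mix_upd lam2 eD k2e) (@mix_upd' lam2 k2 e).
have [g [dg Qg]] := Hcmp le H2.
have hR : delta ends2 e H2 <= delta ends1 e H1.
  apply: le_trans (i1 g); rewrite dg //.
  apply: le_trans (lerB (lexx (2 * delta ends2 e H2)) Qg).
  by rewrite -j2 -[X in X <= _](_ : 2 * delta ends2 e H2 - delta ends2 e H2 = _) //; ring.
rewrite /Dd1 /Dd2 h1 h2.
have p1 := Dd1_gt0 k1; have p2 := Dd2_gt0 k2; rewrite /Dd1 /Dd2 in p1 p2.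
have hq' : (q - 1) * delta ends2 e H2 <= (q - 1) * delta ends1 e H1.
  by apply: ler_wpM2l => //; rewrite subr_ge0.
set A := detLap _ _ _ (mix D lam1 k1 q) in p1 *.
set B := detLap _ _ _ (mix D lam2 k2 q) in p2 *.
have -> : B * (1 + (q - 1) * delta ends2 e H2) * A = (A * B) * (1 + (q - 1) * delta ends2 e H2) by ring.
have -> : A * (1 + (q - 1) * delta ends1 e H1) * B = (A * B) * (1 + (q - 1) * delta ends1 e H1) by ring.
apply: ler_wpM2l; first by apply: mulr_ge0; apply: ltW.
lra.
Qed.


Definition kadd (k : {ffun E -> bool}) (a : {set E}) : {ffun E -> bool} :=
  [ffun e => k e || (e \in a)].

Lemma multi n : forall (a : {set E}) (k1 k2 : {ffun E -> bool}), #|a| = n ->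
  a \subset D -> (forall e, k1 e ==> k2 e) -> (forall e, e \in a -> k2 e = false) ->
  Dd2 (kadd k2 a) * Dd1 k1 <= Dd1 (kadd k1 a) * Dd2 k2.
Proof.
elim: n => [|n IH] a k1 k2.
  move/eqP; rewrite cards_eq0 => /eqP -> _ _ _.
  have kz k : kadd k set0 = k by apply/ffunP => e; rewrite ffunE inE orbF.
  by rewrite !kz mulrC.
move=> ha aD le k2a.
have [e ea] : exists e, e \in a by apply/set0Pn; rewrite -cards_eq0 ha.
have ha0 : #|a :\ e| = n by rewrite (cardsD1 e a) ea add1n in ha; case: ha.
have a0D : a :\ e \subset D by apply: subset_trans aD; apply: subsetDl.
have kU k : kadd k a = upd e (kadd k (a :\ e)).
  apply/ffunP => e'; rewrite updE !ffunE !inE.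
  by case: eqP => [->|ne] /=; rewrite ?ea ?orbT.
have le0 : forall e', kadd k1 (a :\ e) e' ==> kadd k2 (a :\ e) e'.
  move=> e'; rewrite !ffunE; apply/implyP => /orP[h|->]; last by rewrite orbT.
  by move: (le e'); rewrite h /= => ->.
have k2e : kadd k2 (a :\ e) e = false by rewrite ffunE !inE eqxx /= k2a.
have eD : e \in D by apply: (subsetP aD).
have S := single le0 eD k2e.
have I := IH _ k1 k2 ha0 a0D le (fun e' h => k2a e' (subsetP (subsetDl a [set e]) e' h)).
rewrite !kU.
have q1 := Dd1_gt0 k1; have q2 := Dd2_gt0 k2.
have q3 := Dd1_gt0 (kadd k1 (a :\ e)); have q4 := Dd2_gt0 (kadd k2 (a :\ e)).
have q5 := Dd1_gt0 (upd e (kadd k1 (a :\ e))); have q6 := Dd2_gt0 (upd e (kadd k2 (a :\ e))).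
move: S I q1 q2 q3 q4 q5 q6.
set A := Dd2 (upd e _); set B := Dd1 (kadd k1 _); set C := Dd1 (upd e _);
set DD := Dd2 (kadd k2 _); set X := Dd1 k1; set Y := Dd2 k2.
move=> S I q1 q2 q3 q4 q5 q6.
have : (A * X) * (B * DD) <= (C * Y) * (B * DD).
  have -> : (A * X) * (B * DD) = (A * B) * (DD * X) by ring.
  have -> : (C * Y) * (B * DD) = (C * DD) * (B * Y) by ring.
  apply: ler_pM => //; apply: mulr_ge0; apply: ltW => //.
by rewrite ler_pM2r // mulr_gt0.
Qed.


Definition Pw (k : {ffun E -> bool}) : R :=
  p ^+ #|[set e in D | k e]| * (1 - p) ^+ #|[set e in D | ~~ k e]|.

Lemma Pw_mul x y : Pw x * Pw y = Pw (kjoin x y) * Pw (kmeet x y).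
Proof.
rewrite /Pw.
have -> : [set e in D | kjoin x y e] = [set e in D | x e] :|: [set e in D | y e].
  by apply/setP => e; rewrite !inE kjoinE; case: (e \in D).
have -> : [set e in D | kmeet x y e] = [set e in D | x e] :&: [set e in D | y e].
  by apply/setP => e; rewrite !inE kmeetE; case: (e \in D).
have -> : [set e in D | ~~ kjoin x y e] = [set e in D | ~~ x e] :&: [set e in D | ~~ y e].
  by apply/setP => e; rewrite !inE kjoinE negb_or; case: (e \in D).
have -> : [set e in D | ~~ kmeet x y e] = [set e in D | ~~ x e] :|: [set e in D | ~~ y e].
  by apply/setP => e; rewrite !inE kmeetE negb_and; case: (e \in D).
set X := [set e in D | x e]; set Y := [set e in D | y e].
set X' := [set e in D | ~~ x e]; set Y' := [set e in D | ~~ y e].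
have e1 : p ^+ #|X| * p ^+ #|Y| = p ^+ #|X :|: Y| * p ^+ #|X :&: Y|.
  by rewrite -!exprD (cardsUI X Y).
have e2 : (1 - p) ^+ #|X'| * (1 - p) ^+ #|Y'| = (1 - p) ^+ #|X' :&: Y'| * (1 - p) ^+ #|X' :|: Y'|.
  by rewrite -!exprD (addnC #|X' :&: Y'|) (cardsUI X' Y').
set a := p ^+ _ in e1 *; set b := p ^+ #|Y| in e1 *.
set c := p ^+ #|X :|: Y| in e1 *; set d := p ^+ #|X :&: Y| in e1 *.
set a' := (1 - p) ^+ #|X'| in e2 *; set b' := (1 - p) ^+ #|Y'| in e2 *.
set c' := (1 - p) ^+ #|X' :&: Y'| in e2 *; set d' := (1 - p) ^+ #|X' :|: Y'| in e2 *.
have -> : a * a' * (b * b') = (a * b) * (a' * b') by ring.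
rewrite e1 e2; ring.
Qed.

Let w1 := weight Ws1 Es1 ends1 D lam1 q p.
Let w2 := weight Ws2 Es2 ends2 D lam2 q p.

Lemma Pw_ge0 k : 0 <= Pw k.
Proof. by apply: mulr_ge0; apply: exprn_ge0; [exact: ltW | rewrite subr_ge0; exact: ltW]. Qed.
Lemma Pw_gt0 k : 0 < Pw k.
Proof. by apply: mulr_gt0; apply: exprn_gt0; rewrite ?subr_gt0. Qed.

Lemma w1E k : w1 k = Pw k / Num.sqrt (Dd1 k). Proof. by []. Qed.
Lemma w2E k : w2 k = Pw k / Num.sqrt (Dd2 k). Proof. by []. Qed.

Lemma hcond x y : canon D x -> canon D y ->
  w1 x * w2 y <= w2 (kjoin x y) * w1 (kmeet x y).
Proof.
move=> cx cy.
pose a := [set e | x e && ~~ y e].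
have aD : a \subset D.
  apply/subsetP => e; rewrite inE => /andP[xe _]; apply: contraT => eD.
  by move/canonP: cx => /(_ e eD); rewrite xe.
have le : forall e, kmeet x y e ==> y e by move=> e; rewrite kmeetE; apply/implyP => /andP[].
have ya : forall e, e \in a -> y e = false by move=> e; rewrite inE => /andP[_ /negPf].
have M := multi (erefl #|a|) aD le ya.
have E1 : kadd (kmeet x y) a = x.
  by apply/ffunP => e; rewrite ffunE kmeetE inE; case: (x e); case: (y e).
have E2 : kadd y a = kjoin x y.
  by apply/ffunP => e; rewrite ffunE kjoinE inE; case: (x e); case: (y e).
rewrite E1 E2 in M.
rewrite !w1E !w2E.
have -> : Pw x / Num.sqrt (Dd1 x) * (Pw y / Num.sqrt (Dd2 y)) =
  (Pw x * Pw y) * (Num.sqrt (Dd1 x * Dd2 y))^-1.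
  by rewrite sqrtrM ?invfM; [ring | apply: ltW; apply: Dd1_gt0].
have -> : Pw (kjoin x y) / Num.sqrt (Dd2 (kjoin x y)) * (Pw (kmeet x y) / Num.sqrt (Dd1 (kmeet x y))) =
  (Pw x * Pw y) * (Num.sqrt (Dd2 (kjoin x y) * Dd1 (kmeet x y)))^-1.
  by rewrite Pw_mul sqrtrM ?invfM; [ring | apply: ltW; apply: Dd2_gt0].
apply: ler_wpM2l; first by apply: mulr_ge0; apply: Pw_ge0.
have g1 : 0 < Dd1 x * Dd2 y by apply: mulr_gt0; [apply: Dd1_gt0|apply: Dd2_gt0].
have g2 : 0 < Dd2 (kjoin x y) * Dd1 (kmeet x y) by apply: mulr_gt0; [apply: Dd2_gt0|apply: Dd1_gt0].
rewrite lef_pV2 ?posrE ?sqrtr_gt0 //.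
by rewrite ler_sqrt // ltW.
Qed.

Lemma weight_ge0 (Ws : {set W1}) Es ends lam k :
  0 <= weight (R:=R) Ws Es ends D lam q p k.
Proof.
by apply: divr_ge0; [apply: Pw_ge0 | apply: sqrtr_ge0].
Qed.
Lemma weight_ge0' (Ws : {set W2}) Es ends lam k :
  0 <= weight (R:=R) Ws Es ends D lam q p k.
Proof.
by apply: divr_ge0; [apply: Pw_ge0 | apply: sqrtr_ge0].
Qed.

Lemma k0_canon : canon D [ffun => false].
Proof. by apply/canonP => e _; rewrite ffunE. Qed.

Lemma sum_pos (w : {ffun E -> bool} -> R) : (forall k, 0 <= w k) ->
  0 < w [ffun => false] -> 0 < \sum_(k | canon D k) w k.
Proof.
move=> h0 hp; rewrite (bigD1 [ffun => false]) ?k0_canon //=.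
apply: (lt_le_trans hp); rewrite lerDl; apply: sumr_ge0 => k _; exact: h0.
Qed.

Theorem gen_sdom : sdom (Pbc Ws1 Es1 ends1 D lam1 q p) (Pbc Ws2 Es2 ends2 D lam2 q p).
Proof.
move=> A incA; rewrite /Pbc.
have H := holley (@weight_ge0 Ws1 Es1 ends1 lam1) (@weight_ge0' Ws2 Es2 ends2 lam2) hcond incA.
have S1 : 0 < \sum_(k | canon D k) weight Ws1 Es1 ends1 D lam1 q p k.
  apply: sum_pos => [k|]; first exact: weight_ge0.
  rewrite -/w1 w1E; apply: divr_gt0; first exact: Pw_gt0.
  by rewrite sqrtr_gt0; apply: Dd1_gt0.
have S2 : 0 < \sum_(k | canon D k) weight Ws2 Es2 ends2 D lam2 q p k.
  apply: sum_pos => [k|]; first exact: weight_ge0'.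
  rewrite -/w2 w2E; apply: divr_gt0; first exact: Pw_gt0.
  by rewrite sqrtr_gt0; apply: Dd2_gt0.
by rewrite ler_pdivrMr // mulrAC ler_pdivlMr.
Qed.

End Gen.



Section Final.
Variables (R : rcfType) (V E : finType) (ends : E -> V * V).

Lemma adj_sym (Es : {set E}) : symmetric (adj Es ends).
Proof.
move=> x y; apply/existsP/existsP => -[e /andP[eE h]]; exists e;
  by rewrite eE orbC.
Qed.

Lemma cls_eq (F : {set E}) e : e \in F -> cls ends F (ends e).1 = cls ends F (ends e).2.
Proof.
move=> eF; apply/setP => y; rewrite !inE.
apply: same_connect; first exact: sym_connect_sym (adj_sym F).
apply: connect1; apply/existsP; exists e; rewrite eF /=.
by rewrite -surjective_pairing eqxx.
Qed.

Lemma wf_full : wf_mgraph [set: V] [set: E] ends.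
Proof. by move=> e _; rewrite !inE. Qed.

Lemma wf_contr (F : {set E}) : wf_mgraph (contr_vertices ends F) (~: F) (contr_ends ends F).
Proof. by move=> e _; rewrite /contr_ends /= !imset_f. Qed.

Lemma conn_map (e1 : rel V) (T : finType) (e2 : rel T) (h : V -> T) :
  (forall a b, e1 a b -> connect e2 (h a) (h b)) ->
  forall x y, connect e1 x y -> connect e2 (h x) (h y).
Proof.
move=> st x y /connectP[s pth ->]; elim: s x pth => [|z s IH] x /=.
  by rewrite connect0.
move=> /andP[exz pth]; apply: connect_trans (st _ _ exz) (IH _ pth).
Qed.

Lemma conn_contr (F : {set E}) : connected_mgraph [set: V] [set: E] ends ->
  connected_mgraph (contr_vertices ends F) (~: F) (contr_ends ends F).
Proof.
move=> [ne hc]; split.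
  case/set0Pn: ne => v _; apply/set0Pn; exists (cls ends F v); exact: imset_f.
move=> X Y /imsetP[x _ ->] /imsetP[y _ ->].
apply: (conn_map (e1 := adj [set: E] ends)); last by apply: hc; rewrite inE.
move=> a b /existsP[e /andP[_ he]].
case eF: (e \in F).
  have := cls_eq eF; case/orP: he => /eqP ->; move=> /= ->; exact: connect0.
apply: connect1; apply/existsP; exists e; rewrite !inE eF /= /contr_ends.
by case/orP: he => /eqP -> /=; rewrite eqxx ?orbT.
Qed.

Variables (q : R) (hq : 1 <= q).

Lemma cval_le b1 b2 : b1 ==> b2 -> cval q b1 <= cval q b2.
Proof. by case: b1; case: b2 => //= _; rewrite lexx. Qed.

Lemma cval_ge0 b : 0 <= cval q b.
Proof. by case: b => /=; [apply: le_trans hq|]; rewrite ler01. Qed.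

Lemma mix_ge0 (D : {set E}) lam k e : 0 <= mix D lam k q e.
Proof. exact: cval_ge0. Qed.

Lemma cmp_sub (W : finType) (ends' : E -> W * W) (Es1 Es2 : {set E}) (c1 c2 : E -> R)
  (f : W -> R) : Es1 \subset Es2 -> (forall e, e \in Es1 -> c1 e <= c2 e) ->
  (forall e, 0 <= c2 e) -> Qf Es1 ends' c1 f <= Qf Es2 ends' c2 f.
Proof.
move=> sub hle h0; rewrite /Qf (big_setID Es1 (A := Es2)) /=.
rewrite (setIidPr sub); apply: ler_wpDr.
  by apply: sumr_ge0 => e _; apply: mulr_ge0 => //; apply: sqr_ge0.
by apply: ler_sum => e eE; apply: ler_wpM2r; [apply: sqr_ge0 | apply: hle].
Qed.

Lemma cmp_contr (F : {set E}) (c1 c2 : E -> R) (f : {set V} -> R) :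
  (forall e, e \in ~: F -> c1 e <= c2 e) ->
  Qf [set: E] ends c1 (fun v => f (cls ends F v)) <= Qf (~: F) (contr_ends ends F) c2 f.
Proof.
move=> hle; rewrite /Qf (big_setID (~: F) (A := [set: E])) /= setTI.
rewrite [X in _ + X]big1 ?addr0 => [|e]; last first.
  rewrite !inE negbK andbT => eF; by rewrite /delta /= (cls_eq eF) subrr expr0n mulr0.
apply: ler_sum => e eE; apply: ler_wpM2r; [apply: sqr_ge0 | exact: hle].
Qed.

Lemma mix_in (D : {set E}) lam (k : {ffun E -> bool}) e : e \in D -> mix D lam k q e = cval q (k e).
Proof. by move=> eD; rewrite /mix eD. Qed.

Lemma mix_le (D : {set E}) (l1 l2 k1 k2 : {ffun E -> bool}) e :
  l1 e ==> l2 e -> k1 e ==> k2 e -> mix D l1 k1 q e <= mix D l2 k2 q e.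
Proof. by move=> h1 h2; rewrite /mix; case: ifP => _; apply: cval_le. Qed.

End Final.

Unset Implicit Arguments.

Theorem corollary4p9 (R : rcfType) (V E : finType) (ends : E -> V * V)
  (Hsimple : simple_graph ends)
  (Hconn : connected_mgraph [set: V] [set: E] ends)
  (V' : {set V}) (E' : {set E})
  (Hsub : wf_mgraph V' E' ends)
  (Hconn' : connected_mgraph V' E' ends)
  (F : {set E}) (q p : R) (hq : 1 <= q) (hp0 : 0 < p) (hp1 : p < 1)
  (lam1 lam2 : {ffun E -> bool}) (hlam : forall e, lam1 e ==> lam2 e) :
  [/\ sdom (Pfree V' E' ends q p) (Pbc [set: V] [set: E] ends E' lam1 q p),
      sdom (Pbc [set: V] [set: E] ends E' lam1 q p)
           (Pbc [set: V] [set: E] ends E' lam2 q p),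
      sdom (Pbc [set: V] [set: E] ends (~: F) lam2 q p)
           (Pfree (contr_vertices ends F) (~: F) (contr_ends ends F) q p),
      (forall (lam : {ffun E -> bool}) (E'' : {set E}), E'' \subset E' ->
         sdom (Pbc V' E' ends E'' lam q p) (Pbc [set: V] [set: E] ends E'' lam q p))
    & (forall (lam : {ffun E -> bool}) (E'' : {set E}), E'' :&: F = set0 ->
         sdom (Pbc [set: V] [set: E] ends E'' lam q p)
              (Pbc (contr_vertices ends F) (~: F) (contr_ends ends F) E'' lam q p))].
Proof.
have wfT := wf_full ends.
have wfC : wf_mgraph (contr_vertices ends F) (~: F) (contr_ends ends F) by apply: wf_contr.
have cC : connected_mgraph (contr_vertices ends F) (~: F) (contr_ends ends F) by apply: conn_contr.
split.
- rewrite /Pfree; apply: (gen_sdom Hsub Hconn' wfT Hconn (subxx _) (subsetT _) hq hp0 hp1).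
  move=> k1 k2 le f; exists f; split => //.
  apply: cmp_sub; [exact: subsetT | | move=> e; exact: mix_ge0].
  by move=> e eE; apply: mix_le => //; rewrite ffunE.
- apply: (gen_sdom wfT Hconn wfT Hconn (subsetT _) (subsetT _) hq hp0 hp1).
  move=> k1 k2 le f; exists f; split => //.
  apply: cmp_sub; [exact: subxx | | move=> e; exact: mix_ge0].
  by move=> e eE; apply: mix_le.
- rewrite /Pfree; apply: (gen_sdom wfT Hconn wfC cC (subsetT _) (subxx _) hq hp0 hp1).
  move=> k1 k2 le f; exists (fun v => f (cls ends F v)); split => //.
  apply: cmp_contr => e eF; rewrite !mix_in //; exact: cval_le.
- move=> lam E'' sub.
  apply: (gen_sdom Hsub Hconn' wfT Hconn sub (subsetT _) hq hp0 hp1).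
  move=> k1 k2 le f; exists f; split => //.
  apply: cmp_sub; [exact: subsetT | | move=> e; exact: mix_ge0].
  by move=> e eE; apply: mix_le => //; apply/implyP.
- move=> lam E'' dis.
  have sub : E'' \subset ~: F.
    apply/subsetP => e eE; rewrite inE; apply/negP => eF.
    have : e \in E'' :&: F by rewrite inE eE eF.
    by rewrite dis inE.
  apply: (gen_sdom wfT Hconn wfC cC (subsetT _) sub hq hp0 hp1).
  move=> k1 k2 le f; exists (fun v => f (cls ends F v)); split => //.
  by apply: cmp_contr => e eF; apply: mix_le => //; apply/implyP.
Qed.
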